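(* Let $Q\in GL(n,\mathbb{C})$ be a matrix such that $Q\bar Q\in\mathbb{R}I_n$. Then the condition $\operatorname{Tr}(QQ^* )=\operatorname{Tr}((QQ^* )^{-1})$ is equivalent to: $Q\bar Q=\pm I_n$ if $n$ is even, and $Q\bar Q=I_n$ if $n$ is odd.
   Context: $\bar Q$ denotes the entrywise complex conjugate of $Q$ and $Q^*$ its conjugate transpose. *)

(* Defs.v *)
From HB Require Import structures.
From mathcomp Require Import all_boot all_order all_algebra.
From mathcomp Require Import all_reals.
From mathcomp.real_closed Require Import complex.
Set Implicit Arguments. Unset Strict Implicit. Unset Printing Implicit Defensive.
Import Order.TTheory GRing.Theory Num.Theory.
Local Open Scope ring_scope.

Definition mxconj (R : realType) (m n : nat) (Q : 'M[R[i]]_(m, n)) : 'M[R[i]]_(m, n) :=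
  map_mx (fun z => z^*) Q.

Definition mxadj (R : realType) (m n : nat) (Q : 'M[R[i]]_(m, n)) : 'M[R[i]]_(n, m) :=
  (mxconj Q)^T.

(* Main.v *)
Require Import Defs.
From HB Require Import structures.
From mathcomp Require Import all_boot all_order all_algebra.
From mathcomp Require Import all_reals.
From mathcomp.real_closed Require Import complex.
Import Order.TTheory GRing.Theory Num.Theory.
Local Open Scope ring_scope.

Theorem proposition1 (R : realType) (n : nat) (Q : 'M[R[i]]_n) :
  Q \in unitmx ->
  (exists r : R[i], r \is Num.real /\ Q *m mxconj Q = r%:M) ->
  (\tr (Q *m mxadj Q) = \tr (invmx (Q *m mxadj Q)) <->
   (if odd n then Q *m mxconj Q = 1%:M
    else Q *m mxconj Q = 1%:M \/ Q *m mxconj Q = - 1%:M)).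
Proof.
case: n Q => [|k] Q.
  move=> _ _; split=> _; last by rewrite /mxtrace !big_ord0.
  by rewrite /=; left; rewrite [LHS]flatmx0 [RHS]flatmx0.
set n := k.+1.
move=> Qu [r [rR hQC]].
set C := mxconj Q.
have hC : C = map_mx (@conjc R) Q by [].
have hQC' : Q *m C = r%:M := hQC.
have hrc : r^*%C = r by case/complex_realP: rR => x ->; rewrite conjc_real.
have hdet : \det Q * (\det Q)^*%C = r ^+ n.
  by rewrite -det_scalar -hQC det_mulmx /C /mxconj (det_map_mx (@conjc R : {rmorphism _ -> _})).
have dQ0 : \det Q != 0 by rewrite -unitfE -unitmxE.
have r0 : r != 0.
  apply/negP => /eqP r0; move: hdet; rewrite r0 expr0n /= => /eqP.
  by rewrite mulf_eq0 conjc_eq0 orbb (negPf dQ0).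
have hCQ : C *m Q = r%:M.
  have := congr1 (map_mx (@conjc R)) hQC.
  rewrite (map_mxM (@conjc R : {rmorphism _ -> _})) (map_scalar_mx (@conjc R : {rmorphism _ -> _})) /= hrc.
  suff -> : map_mx (@conjc R) C = Q by [].
  by apply/matrixP => i j; rewrite !mxE conjcK.
set P := Q *m mxadj Q.
have hP : P = Q *m C^T by [].
set X := r^-2 *: (Q^T *m C).
have hXP : X *m P = 1%:M.
  rewrite hP /X -scalemxAl mulmxA -(mulmxA _ C Q) hCQ mul_mx_scalar -scalemxAl.
  rewrite -trmx_mul (_ : (C *m Q)^T = (r%:M)^T); last exact: congr1 _ hCQ.
  rewrite tr_scalar_mx !scale_scalar_mx; congr (_%:M).
  by rewrite expr2 invfM mulrA mulfVK // mulVf.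
have Pu : P \in unitmx by case: (mulmx1_unit hXP).
have hinv : invmx P = X by rewrite -[LHS]mul1mx -hXP -mulmxA mulmxV // mulmx1.
set t := \tr P.
have htX : \tr X = r^-2 * t.
  rewrite /X mxtraceZ; congr (_ * _).
  by rewrite -mxtrace_tr trmx_mul trmxK mxtrace_mulC.
have ht0 : t != 0.
  apply/negP => /eqP ht.
  have hQ0 : Q = 0.
    apply/matrixP => i j; rewrite mxE.
    have e : t = \sum_i \sum_j (Q i j * (Q i j)^*%C).
      rewrite /t /mxtrace; apply: eq_bigr => a _; rewrite hP mxE.
      by apply: eq_bigr => b _; rewrite !mxE.
    have h1 : forall a, 0 <= \sum_j (Q a j * (Q a j)^*%C).
      by move=> a; apply: sumr_ge0 => b _; apply: mulcJ_ge0.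
    have := psumr_eq0P (fun a _ => h1 a) (esym (etrans (esym ht) e)) (isT : true).
    move=> /(_ i) h2.
    have := psumr_eq0P (fun b _ => mulcJ_ge0 (Q i b)) h2 (isT : true).
    by move=> /(_ j) /eqP; rewrite mulf_eq0 conjc_eq0 orbb => /eqP.
  by move: dQ0; rewrite hQ0 det0 eqxx.
have key : t = r^-2 * t <-> (r == 1) || (r == -1).
  rewrite -sqrf_eq1; split.
    move=> h; have : (1 - r^-2) * t == 0 by rewrite mulrBl mul1r -h subrr.
    by rewrite mulf_eq0 (negPf ht0) orbF subr_eq0 eq_sym invr_eq1.
  move=> /eqP h; by rewrite h invr1 mul1r.
have sc : forall a b : R[i], (a%:M : 'M_n) = b%:M <-> a = b.
  move=> a b; split; last by move->.
  by move/matrixP => /(_ ord0 ord0); rewrite !mxE eqxx !mulr1n.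
rewrite hinv htX key hQC.
have hN : - (1%:M : 'M[R[i]]_n) = (-1)%:M.
  by apply/matrixP => i j; rewrite !mxE; case: (i == j); rewrite ?mulr1n ?mulr0n ?oppr0.
case: ifP => hodd.
  rewrite sc; split; last by move->; rewrite eqxx.
  case/orP => /eqP // hr; exfalso.
  move: hdet; rewrite hr -signr_odd hodd expr1 => h.
  have := mulcJ_ge0 (\det Q); rewrite h.
  by rewrite ler0N1.
rewrite hN !sc; split.
  by case/orP => /eqP ->; [left|right].
by case=> ->; rewrite eqxx ?orbT.
Qed.
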